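(* On the $\kappa G^\#$-module $\Lambda_G$: (i) the dot product and the bracket are $\kappa G^\#$-bilinear; the dot product is symmetric and the bracket skew-symmetric; (ii) the bracket satisfies the Jacobi identity $[[\vec x,\vec y],\vec z]+[[\vec y,\vec z],\vec x]+[[\vec z,\vec x],\vec y]=0$; (iii) the map $(\vec x,\vec y,\vec z)\mapsto[\vec x,\vec y]\cdot\vec z$ is an alternating trilinear map; (iv) $[[\vec x,\vec y],\vec z]=(\vec x\cdot\vec z)\vec y-(\vec y\cdot\vec z)\vec x$ for all $\vec x,\vec y,\vec z\in\Lambda_G$.
   Context: Let $\kappa$ be a field of characteristic $0$ and $G$ a group. Let $*:\kappa G\to\kappa G$ be the $\kappa$-linear map with $g^*=g^{-1}$, $(\kappa G)^*$ its fixed points, and $A_G$ the quotient of $\kappa G$ by the two-sided ideal generated by all $ab-ba$, $a\in\kappa G$, $b\in(\kappa G)^*$; $*$ descends to $A_G$. Let $\kappa G^\#=\{x\in A_G:x^*=x\}$ (a commutative subring of the centre of $A_G$) and $\Lambda_G=\{x\in A_G:x^*=-x\}$, a $\kappa G^\#$-module. For $\vec x,\vec y\in\Lambda_G$ define $\vec x\cdot\vec y=-\tfrac12(\vec x\vec y+\vec y\vec x)\in\kappa G^\#$ and $[\vec x,\vec y]=\tfrac12(\vec x\vec y-\vec y\vec x)\in\Lambda_G$. *)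

(* Defs.v *)
From HB Require Import structures.
From mathcomp Require Import all_boot all_order all_algebra.
Set Implicit Arguments. Unset Strict Implicit. Unset Printing Implicit Defensive.
Import GRing.Theory.
Local Open Scope ring_scope.

(* The group algebra kappa G of an arbitrary (possibly infinite) group G,
   realised by formal finite sums  sum_i c_i g_i  (lists of pairs),
   two lists being the same element of kappa G iff all their coefficients agree. *)
Section GroupAlgebra.
Variables (K : fieldType) (G : groupType).

Definition KG := seq (K * G).

Definition coef (a : KG) (g : G) : K := \sum_(p <- a | p.2 == g) p.1.

Definition kg_eq (a b : KG) : Prop := forall g, coef a g = coef b g.

Definition kg_add (a b : KG) : KG := a ++ b.
Definition kg_scale (c : K) (a : KG) : KG := [seq (c * p.1, p.2) | p <- a].
Definition kg_opp (a : KG) : KG := kg_scale (-1) a.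
Definition kg_sub (a b : KG) : KG := kg_add a (kg_opp b).
Definition kg_mul (a b : KG) : KG :=
  [seq (p.1 * q.1, monoid.mul p.2 q.2) | p <- a, q <- b].
Definition kg_star (a : KG) : KG := [seq (p.1, monoid.inv p.2) | p <- a].

Definition kg_fixed (b : KG) : Prop := kg_eq (kg_star b) b.

Inductive idealI : KG -> Prop :=
  | idealI_gen a b : kg_fixed b -> idealI (kg_sub (kg_mul a b) (kg_mul b a))
  | idealI_eq a b : kg_eq a b -> idealI a -> idealI b
  | idealI_zero : idealI [::]
  | idealI_add a b : idealI a -> idealI b -> idealI (kg_add a b)
  | idealI_lmul c a : idealI a -> idealI (kg_mul c a)
  | idealI_rmul a c : idealI a -> idealI (kg_mul a c).

(* equality in A_G = kappa G / I (elements of A_G are represented by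
   elements of kappa G) *)
Definition AG_eq (a b : KG) : Prop := idealI (kg_sub a b).

Definition in_sharp (a : KG) : Prop := AG_eq (kg_star a) a.
Definition in_Lambda (x : KG) : Prop := AG_eq (kg_star x) (kg_opp x).

Definition dotG (x y : KG) : KG :=
  kg_scale (- (2%:R)^-1) (kg_add (kg_mul x y) (kg_mul y x)).
Definition brkG (x y : KG) : KG :=
  kg_scale ((2%:R)^-1) (kg_sub (kg_mul x y) (kg_mul y x)).

End GroupAlgebra.

(* Main.v *)
Require Import Defs.
From HB Require Import structures.
From mathcomp Require Import all_boot all_order all_algebra ring.
From mathcomp Require Import boolp.
From Stdlib Require Import ProofIrrelevance.
Set Implicit Arguments. Unset Strict Implicit. Unset Printing Implicit Defensive.
Import GRing.Theory.
Local Open Scope ring_scope.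

Section KGfacts.
Variables (K : fieldType) (G : groupType).
Implicit Types a b : KG K G.

Definition int (a : KG K G) (f : G -> K) : K := \sum_(p <- a) p.1 * f p.2.

Lemma int_nil f : int [::] f = 0. Proof. by rewrite /int big_nil. Qed.
Lemma int_cat a b f : int (kg_add a b) f = int a f + int b f.
Proof. by rewrite /int /kg_add big_cat. Qed.
Lemma int_scale (c : K) a f : int (kg_scale c a) f = c * int a f.
Proof. by rewrite /int /kg_scale big_map mulr_sumr; apply: eq_bigr => p _ /=; rewrite mulrA. Qed.
Lemma int_mul a b f :
  int (kg_mul a b) f = int a (fun h => int b (fun k => f (monoid.mul h k))).
Proof.
rewrite /int /kg_mul big_allpairs_dep; apply: eq_bigr => p _.
rewrite mulr_sumr; apply: eq_bigr => q _ /=; by rewrite !mulrA [p.1 * _]mulrC.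
Qed.
Lemma int_star a f : int (kg_star a) f = int a (fun h => f (monoid.inv h)).
Proof. by rewrite /int /kg_star big_map. Qed.
Lemma int_ext a f f' : f =1 f' -> int a f = int a f'.
Proof. by move=> e; apply: eq_bigr => p _; rewrite e. Qed.
Lemma int_exch a b (F : G -> G -> K) :
  int a (fun h => int b (fun k => F h k)) = int b (fun k => int a (fun h => F h k)).
Proof.
rewrite /int.
transitivity (\sum_(p <- a) \sum_(q <- b) p.1 * q.1 * F p.2 q.2).
  by apply: eq_bigr => p _; rewrite mulr_sumr; apply: eq_bigr => q _; rewrite mulrA.
rewrite exchange_big; apply: eq_bigr => q _; rewrite mulr_sumr; apply: eq_bigr => p _.
by rewrite mulrA [q.1 * _]mulrC.
Qed.

Lemma coef_int a g : coef a g = int a (fun h => (h == g)%:R).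
Proof.
rewrite /coef /int big_mkcond; apply: eq_bigr => p _.
by case: (p.2 == g); rewrite ?mulr1 ?mulr0.
Qed.

Lemma int_coef a f (s : seq G) : uniq s -> (forall p, p \in a -> p.2 \in s) ->
  int a f = \sum_(g <- s) coef a g * f g.
Proof.
move=> us; elim: a => [|p a IH] H.
  by rewrite int_nil big1 // => g _; rewrite /coef big_nil mul0r.
rewrite /int big_cons -/(int a f) IH; last by move=> q qa; apply: H; rewrite inE qa orbT.
have ps : p.2 \in s by apply: H; rewrite inE eqxx.
rewrite (bigD1_seq p.2 ps us) (@bigD1_seq _ _ _ _ _ p.2 (fun g => coef (p :: a) g * f g) ps us) /=.
have -> : coef (p :: a) p.2 = p.1 + coef a p.2 by rewrite /coef big_cons eqxx.
rewrite mulrDl -addrA; congr (_ + _); congr (_ + _).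
apply: eq_bigr => g /negPf gn; rewrite /coef big_cons eq_sym gn.
done.
Qed.

Lemma kg_eq_int a b : kg_eq a b -> forall f, int a f = int b f.
Proof.
move=> e f; pose s := undup [seq p.2 | p <- a ++ b].
have Ha : forall p, p \in a -> p.2 \in s.
  by move=> p pa; rewrite mem_undup; apply: map_f; rewrite mem_cat pa.
have Hb : forall p, p \in b -> p.2 \in s.
  by move=> p pa; rewrite mem_undup; apply: map_f; rewrite mem_cat pa orbT.
rewrite (int_coef f (undup_uniq _) Ha) (int_coef f (undup_uniq _) Hb).
by apply: eq_bigr => g _; rewrite e.
Qed.

Lemma int_kg_eq a b : (forall f, int a f = int b f) -> kg_eq a b.
Proof. by move=> e g; rewrite !coef_int e. Qed.


Lemma int_fD a (F H : G -> K) : int a (fun h => F h + H h) = int a F + int a H.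
Proof. by rewrite /int -big_split; apply: eq_bigr => p _; rewrite mulrDr. Qed.
Lemma int_fZ a (c : K) (F : G -> K) : int a (fun h => c * F h) = c * int a F.
Proof. by rewrite /int mulr_sumr; apply: eq_bigr => p _; rewrite mulrCA. Qed.
Lemma int_f0 a : int a (fun _ => 0) = 0.
Proof. by rewrite /int big1 // => p _; rewrite mulr0. Qed.

Definition kg_one : KG K G := [:: (1, 1%g)].
Lemma int_one f : int kg_one f = f 1%g.
Proof. by rewrite /int big_cons big_nil addr0 mul1r. Qed.

Local Notation "a ~~ b" := (kg_eq a b) (at level 70).

Lemma kg_eqE a b : (forall f, int a f = int b f) <-> a ~~ b.
Proof. split; [exact: int_kg_eq | exact: kg_eq_int]. Qed.

Ltac kgsimp := rewrite /kg_sub /kg_opp;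
  rewrite ?(int_cat, int_scale, int_mul, int_star, int_nil, int_one, int_fD, int_fZ, int_f0).

Lemma kg_refl a : a ~~ a. Proof. by []. Qed.
Lemma kg_sym a b : a ~~ b -> b ~~ a. Proof. by move=> e g. Qed.
Lemma kg_trans a b c : a ~~ b -> b ~~ c -> a ~~ c.
Proof. by move=> e1 e2 g; rewrite e1. Qed.

Lemma kg_addC a b : kg_add a b ~~ kg_add b a.
Proof. by apply/kg_eqE => f; kgsimp; rewrite addrC. Qed.
Lemma kg_addA a b c : kg_add a (kg_add b c) ~~ kg_add (kg_add a b) c.
Proof. by apply/kg_eqE => f; kgsimp; rewrite addrA. Qed.
Lemma kg_add0 a : kg_add [::] a ~~ a. Proof. by []. Qed.
Lemma kg_addN a : kg_add (kg_opp a) a ~~ [::].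
Proof. by apply/kg_eqE => f; kgsimp; ring. Qed.

Lemma kg_mulA a b c : kg_mul a (kg_mul b c) ~~ kg_mul (kg_mul a b) c.
Proof.
apply/kg_eqE => f; kgsimp; apply: int_ext => h.
rewrite ?int_mul; apply: int_ext => k; apply: int_ext => l; by rewrite monoid.mulgA.
Qed.
Lemma kg_mul1l a : kg_mul kg_one a ~~ a.
Proof. by apply/kg_eqE => f; kgsimp; apply: int_ext => h; rewrite monoid.mul1g. Qed.
Lemma kg_mul1r a : kg_mul a kg_one ~~ a.
Proof. by apply/kg_eqE => f; kgsimp; apply: int_ext => h; rewrite int_one monoid.mulg1. Qed.
Lemma kg_mulDl a b c : kg_mul (kg_add a b) c ~~ kg_add (kg_mul a c) (kg_mul b c).
Proof. by apply/kg_eqE => f; kgsimp. Qed.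
Lemma kg_mulDr a b c : kg_mul a (kg_add b c) ~~ kg_add (kg_mul a b) (kg_mul a c).
Proof.
apply/kg_eqE => f; kgsimp; rewrite -int_fD; apply: int_ext => h; by rewrite int_cat.
Qed.
Lemma kg_scA (c d : K) a : kg_scale c (kg_scale d a) ~~ kg_scale (c * d) a.
Proof. by apply/kg_eqE => f; kgsimp; rewrite mulrA. Qed.
Lemma kg_sc1 a : kg_scale 1 a ~~ a.
Proof. by apply/kg_eqE => f; kgsimp; rewrite mul1r. Qed.
Lemma kg_scDr (c : K) a b : kg_scale c (kg_add a b) ~~ kg_add (kg_scale c a) (kg_scale c b).
Proof. by apply/kg_eqE => f; kgsimp; rewrite mulrDr. Qed.
Lemma kg_scDl (c d : K) a : kg_scale (c + d) a ~~ kg_add (kg_scale c a) (kg_scale d a).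
Proof. by apply/kg_eqE => f; kgsimp; rewrite mulrDl. Qed.
Lemma kg_sAl (c : K) a b : kg_scale c (kg_mul a b) ~~ kg_mul (kg_scale c a) b.
Proof. by apply/kg_eqE => f; kgsimp. Qed.
Lemma kg_sAr (c : K) a b : kg_scale c (kg_mul a b) ~~ kg_mul a (kg_scale c b).
Proof.
apply/kg_eqE => f; kgsimp; rewrite -int_fZ; apply: int_ext => h; by rewrite int_scale.
Qed.
Lemma kg_scM (c : K) a : kg_scale c a ~~ kg_mul [:: (c, 1%g)] a.
Proof.
apply/kg_eqE => f; kgsimp; rewrite /int big_cons big_nil addr0 /=.
congr (_ * _); apply: eq_bigr => p _; by rewrite monoid.mul1g.
Qed.
Lemma kg_starD a b : kg_star (kg_add a b) ~~ kg_add (kg_star a) (kg_star b).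
Proof. by apply/kg_eqE => f; kgsimp. Qed.
Lemma kg_starZ (c : K) a : kg_star (kg_scale c a) ~~ kg_scale c (kg_star a).
Proof. by apply/kg_eqE => f; kgsimp. Qed.
Lemma kg_starM a b : kg_star (kg_mul a b) ~~ kg_mul (kg_star b) (kg_star a).
Proof.
apply/kg_eqE => f; kgsimp; rewrite int_exch; apply: int_ext => k; kgsimp.
by apply: int_ext => h; rewrite monoid.invgM.
Qed.
Lemma kg_starK a : kg_star (kg_star a) ~~ a.
Proof. by apply/kg_eqE => f; kgsimp; apply: int_ext => h; rewrite monoid.invgK. Qed.

Lemma kg_add_eq a a' b b' : a ~~ a' -> b ~~ b' -> kg_add a b ~~ kg_add a' b'.
Proof. by move=> /kg_eqE e1 /kg_eqE e2; apply/kg_eqE => f; kgsimp; rewrite e1 e2. Qed.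
Lemma kg_mul_eq a a' b b' : a ~~ a' -> b ~~ b' -> kg_mul a b ~~ kg_mul a' b'.
Proof.
move=> /kg_eqE e1 /kg_eqE e2; apply/kg_eqE => f; kgsimp; rewrite e1.
by apply: int_ext => h; rewrite e2.
Qed.
Lemma kg_scale_eq (c : K) a a' : a ~~ a' -> kg_scale c a ~~ kg_scale c a'.
Proof. by move=> /kg_eqE e1; apply/kg_eqE => f; kgsimp; rewrite e1. Qed.
Lemma kg_star_eq a a' : a ~~ a' -> kg_star a ~~ kg_star a'.
Proof. by move=> /kg_eqE e1; apply/kg_eqE => f; kgsimp; rewrite e1. Qed.


Lemma int_mulrD a b c f : int (kg_mul a (kg_add b c)) f = int (kg_mul a b) f + int (kg_mul a c) f.
Proof. by rewrite (kg_eq_int (kg_mulDr a b c)) int_cat. Qed.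
Lemma int_mulrZ a b (k : K) f : int (kg_mul a (kg_scale k b)) f = k * int (kg_mul a b) f.
Proof. by rewrite -(kg_eq_int (kg_sAr k a b)) int_scale. Qed.

Ltac kgsimp2 := rewrite /kg_sub /kg_opp;
  rewrite ?(int_mulrD, int_mulrZ, int_cat, int_scale, int_nil, int_one).

Lemma kg_subN a b : kg_sub b a ~~ kg_opp (kg_sub a b).
Proof. by apply/kg_eqE => f; kgsimp2; ring. Qed.
Lemma kg_starB a b : kg_star (kg_sub a b) ~~ kg_sub (kg_star a) (kg_star b).
Proof. by apply/kg_eqE => f; kgsimp; kgsimp. Qed.

Lemma I_eq' a b : idealI a -> a ~~ b -> idealI b.
Proof. by move=> Ia e; apply: idealI_eq e Ia. Qed.
Lemma I_scale (k : K) a : idealI a -> idealI (kg_scale k a).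
Proof. move=> Ia; apply: (I_eq' (idealI_lmul [:: (k, 1%g)] Ia)); apply: kg_sym; apply: kg_scM. Qed.
Lemma I_star a : idealI a -> idealI (kg_star a).
Proof.
elim=> {a} [a b hb|a b e _ IH|| a b _ IHa _ IHb|c a _ IH|a c _ IH].
- have := I_scale (-1) (idealI_gen (kg_star a) hb); move=> I; apply: I_eq' I _; apply: kg_sym.
  apply: kg_trans (kg_starB _ _) _; apply: kg_trans (kg_subN _ _); apply: kg_add_eq.
    apply: kg_trans (kg_starM _ _) _; exact: kg_mul_eq.
  apply: kg_scale_eq; apply: kg_trans (kg_starM _ _) _; exact: kg_mul_eq.
- by apply: I_eq' IH _; apply: kg_star_eq.
- exact: idealI_zero.
- by apply: I_eq' (idealI_add IHa IHb) _; apply: kg_sym; apply: kg_starD.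
- by apply: I_eq' (idealI_rmul _ IH) _; apply: kg_sym; apply: kg_starM.
- by apply: I_eq' (idealI_lmul _ IH) _; apply: kg_sym; apply: kg_starM.
Qed.

Lemma AG_kg a b : a ~~ b -> AG_eq a b.
Proof.
rewrite /AG_eq => e; apply: (I_eq' (@idealI_zero K G)); apply/kg_eqE => f; kgsimp2.
by rewrite (kg_eq_int e); ring.
Qed.
Lemma AG_refl a : AG_eq a a. Proof. exact: AG_kg. Qed.
Lemma AG_sym a b : AG_eq a b -> AG_eq b a.
Proof. rewrite /AG_eq; move=> /(I_scale (-1)) I; apply: I_eq' I _; apply: kg_sym; apply: kg_subN. Qed.
Lemma AG_trans a b c : AG_eq a b -> AG_eq b c -> AG_eq a c.
Proof. rewrite /AG_eq; move=> I1 I2; apply: I_eq' (idealI_add I1 I2) _; apply/kg_eqE => f; kgsimp2; ring. Qed.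
Lemma AG_add a a' b b' : AG_eq a a' -> AG_eq b b' -> AG_eq (kg_add a b) (kg_add a' b').
Proof. rewrite /AG_eq; move=> I1 I2; apply: I_eq' (idealI_add I1 I2) _; apply/kg_eqE => f; kgsimp2; ring. Qed.
Lemma AG_mul a a' b b' : AG_eq a a' -> AG_eq b b' -> AG_eq (kg_mul a b) (kg_mul a' b').
Proof.
rewrite /AG_eq => I1 I2; apply: I_eq' (idealI_add (idealI_rmul b I1) (idealI_lmul a' I2)) _.
apply/kg_eqE => f; kgsimp2; rewrite !int_mul; kgsimp2; ring.
Qed.
Lemma AG_scale (k : K) a a' : AG_eq a a' -> AG_eq (kg_scale k a) (kg_scale k a').
Proof. rewrite /AG_eq; move=> /(I_scale k) I; apply: I_eq' I _; apply/kg_eqE => f; kgsimp2; ring. Qed.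
Lemma AG_star a a' : AG_eq a a' -> AG_eq (kg_star a) (kg_star a').
Proof. rewrite /AG_eq; move=> /I_star I; apply: I_eq' I _; apply/kg_eqE => f; kgsimp; kgsimp; ring. Qed.

End KGfacts.

Section Quot.
Variables (K : fieldType) (G : groupType).
Implicit Types a b : KG K G.

Definition Q := {P : KG K G -> Prop | exists a, P = AG_eq a}.
Definition pi a : Q := exist _ (AG_eq a) (ex_intro _ a erefl).
Definition repr (q : Q) : KG K G :=
  proj1_sig (cid (proj2_sig q)).

Lemma reprK q : pi (repr q) = q.
Proof.
case: q => P HP; rewrite /repr /pi /=.
case: (cid HP) => a e /=.
subst P; congr exist; apply: proof_irrelevance.
Qed.

Lemma piE a b : pi a = pi b <-> AG_eq a b.
Proof.
split=> [e|e].
  have := congr1 (@proj1_sig _ _) e => /= /(congr1 (fun P => P b)) ->.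
  exact: AG_refl.
rewrite /pi; have E : AG_eq a = AG_eq b.
  apply: funext => x; apply: propext.
  split=> h; [exact: AG_trans (AG_sym e) h | exact: AG_trans e h].
move: (ex_intro _ a _) (ex_intro _ b _); rewrite E => p1 p2.
by congr exist; apply: proof_irrelevance.
Qed.

Lemma quotW (P : Q -> Prop) : (forall a, P (pi a)) -> forall q, P q.
Proof. by move=> H q; rewrite -(reprK q). Qed.

Lemma repr_pi a : AG_eq (repr (pi a)) a.
Proof. by apply/piE; rewrite reprK. Qed.

Fact Qkey : unit. Proof. exact: tt. Qed.
Definition Qzero : Q := pi [::].
Definition Qone : Q := pi (kg_one K G).
Definition Qadd x y : Q := locked_with Qkey (pi (kg_add (repr x) (repr y))).
Definition Qopp x : Q := locked_with Qkey (pi (kg_opp (repr x))).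
Definition Qmul x y : Q := locked_with Qkey (pi (kg_mul (repr x) (repr y))).
Definition Qsc (k : K) x : Q := locked_with Qkey (pi (kg_scale k (repr x))).
Definition Qst x : Q := locked_with Qkey (pi (kg_star (repr x))).

Lemma QaddE a b : Qadd (pi a) (pi b) = pi (kg_add a b).
Proof. by rewrite /Qadd locked_withE; apply/piE; apply: AG_add; apply: repr_pi. Qed.
Lemma QmulE a b : Qmul (pi a) (pi b) = pi (kg_mul a b).
Proof. by rewrite /Qmul locked_withE; apply/piE; apply: AG_mul; apply: repr_pi. Qed.
Lemma QoppE a : Qopp (pi a) = pi (kg_opp a).
Proof. by rewrite /Qopp locked_withE; apply/piE; apply: AG_scale; apply: repr_pi. Qed.
Lemma QscE k a : Qsc k (pi a) = pi (kg_scale k a).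
Proof. by rewrite /Qsc locked_withE; apply/piE; apply: AG_scale; apply: repr_pi. Qed.
Lemma QstE a : Qst (pi a) = pi (kg_star a).
Proof. by rewrite /Qst locked_withE; apply/piE; apply: AG_star; apply: repr_pi. Qed.

Ltac qE := rewrite ?(QaddE, QmulE, QoppE, QscE, QstE); apply/piE; apply: AG_kg.
Ltac qind := repeat (let x := fresh in elim/quotW => x).

Lemma QaddA : associative Qadd.
Proof. by qind; qE; apply: kg_addA. Qed.
Lemma QaddC : commutative Qadd.
Proof. by qind; qE; apply: kg_addC. Qed.
Lemma Qadd0 : left_id Qzero Qadd.
Proof. by qind; rewrite /Qzero; qE. Qed.
Lemma QaddN : left_inverse Qzero Qopp Qadd.
Proof. by qind; rewrite /Qzero; qE; apply: kg_addN. Qed.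
Lemma QmulA : associative Qmul.
Proof. by qind; qE; apply: kg_mulA. Qed.
Lemma Qmul1 : left_id Qone Qmul.
Proof. by qind; rewrite /Qone; qE; apply: kg_mul1l. Qed.
Lemma Qmulr1 : right_id Qone Qmul.
Proof. by qind; rewrite /Qone; qE; apply: kg_mul1r. Qed.
Lemma QmulDl : left_distributive Qmul Qadd.
Proof. by qind; qE; apply: kg_mulDl. Qed.
Lemma QmulDr : right_distributive Qmul Qadd.
Proof. by qind; qE; apply: kg_mulDr. Qed.
End Quot.

HB.instance Definition _ (K : fieldType) (G : groupType) := gen_eqMixin (Q K G).
HB.instance Definition _ (K : fieldType) (G : groupType) := gen_choiceMixin (Q K G).
HB.instance Definition _ (K : fieldType) (G : groupType) :=
  GRing.isPzRing.Build (Q K G) (@QaddA K G) (@QaddC K G) (@Qadd0 K G) (@QaddN K G)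
    (@QmulA K G) (@Qmul1 K G) (@Qmulr1 K G) (@QmulDl K G) (@QmulDr K G).

Section Quot2.
Variables (K : fieldType) (G : groupType).
Implicit Types a b : KG K G.
Local Notation Q := (Q K G).

Ltac qE := rewrite ?(QaddE, QmulE, QoppE, QscE, QstE); apply/piE; apply: AG_kg.
Ltac qind := repeat (let x := fresh in elim/quotW => x).

Lemma pi_add a b : pi (kg_add a b) = pi a + pi b :> Q. Proof. by rewrite -QaddE. Qed.
Lemma pi_mul a b : pi (kg_mul a b) = pi a * pi b :> Q. Proof. by rewrite -QmulE. Qed.
Lemma pi_opp a : pi (kg_opp a) = - pi a :> Q. Proof. by rewrite -QoppE. Qed.
Lemma pi_sub a b : pi (kg_sub a b) = pi a - pi b :> Q. Proof. by rewrite /kg_sub pi_add pi_opp. Qed.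
Lemma pi_nil : pi [::] = 0 :> Q. Proof. by []. Qed.
Lemma pi_star a : pi (kg_star a) = Qst (pi a) :> Q. Proof. by rewrite -QstE. Qed.

Lemma QscA (k l : K) (x : Q) : Qsc k (Qsc l x) = Qsc (k * l) x.
Proof. by move: x; qind; qE; apply: kg_scA. Qed.
Lemma Qsc1 : left_id 1 (@Qsc K G).
Proof. by qind; qE; apply: kg_sc1. Qed.
Lemma QscDr : right_distributive (@Qsc K G) +%R.
Proof.
move=> k; elim/quotW => x; elim/quotW => y; rewrite -[pi x + _]pi_add !QscE -[pi (kg_scale k x) + _]pi_add.
by qE; apply: kg_scDr.
Qed.
Lemma QscDl (k l : K) (v : Q) : Qsc (k + l) v = Qsc k v + Qsc l v.
Proof.
move: v; elim/quotW => x; rewrite !QscE -[pi (kg_scale k x) + _]pi_add.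
by qE; apply: kg_scDl.
Qed.
End Quot2.

HB.instance Definition _ (K : fieldType) (G : groupType) :=
  GRing.Zmodule_isLmodule.Build K (Q K G) (@QscA K G) (@Qsc1 K G) (@QscDr K G) (fun v k l => @QscDl K G k l v).

Section Quot3.
Variables (K : fieldType) (G : groupType).
Implicit Types a b : KG K G.
Local Notation Q := (Q K G).

Lemma pi_scale (k : K) a : pi (kg_scale k a) = k *: pi a :> Q. Proof. by rewrite -QscE. Qed.

Ltac qE := rewrite ?(QaddE, QmulE, QoppE, QscE, QstE); apply/piE; apply: AG_kg.
Ltac qind := repeat (let x := fresh in elim/quotW => x).
Ltac pifold := do 4 (rewrite -?pi_mul -?pi_scale -?pi_add -?pi_star).

Lemma QsAl (k : K) (x y : Q) : k *: (x * y) = (k *: x) * y.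
Proof. move: x y; qind; pifold; qE; apply: kg_sAl. Qed.
Lemma QsAr (k : K) (x y : Q) : k *: (x * y) = x * (k *: y).
Proof. move: x y; qind; pifold; qE; apply: kg_sAr. Qed.
Lemma QstD (x y : Q) : Qst (x + y) = Qst x + Qst y.
Proof. move: x y; qind; pifold; qE; apply: kg_starD. Qed.
Lemma QstM (x y : Q) : Qst (x * y) = Qst y * Qst x.
Proof. move: x y; qind; pifold; qE; apply: kg_starM. Qed.
Lemma QstZ (k : K) (x : Q) : Qst (k *: x) = k *: Qst x.
Proof. move: x; qind; pifold; qE; apply: kg_starZ. Qed.
Lemma QstK (x : Q) : Qst (Qst x) = x.
Proof. move: x; qind; pifold; qE; apply: kg_starK. Qed.
End Quot3.

Section Quot4.
Variables (K : fieldType) (G : groupType).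
Hypothesis charK0 : [pchar K] =i pred0.
Implicit Types a b : KG K G.
Local Notation Q := (Q K G).

Ltac kgsimp := rewrite /kg_sub /kg_opp;
  rewrite ?(int_cat, int_scale, int_mul, int_star, int_nil, int_one, int_fD, int_fZ, int_f0).

Lemma two_neq0 : (2%:R : K) != 0.
Proof. by have /pcharf0P -> := charK0. Qed.

Lemma Qcentral (u : Q) : Qst u = u -> forall x, x * u = u * x.
Proof.
move: u; elim/quotW => b0 hb; elim/quotW => x.
pose b := kg_scale (2%:R^-1) (kg_add b0 (kg_star b0)).
have fixb : kg_fixed b.
  apply/kg_eqE => f; rewrite /b; kgsimp; kgsimp.
  rewrite (@int_ext _ _ b0 (fun h => f (monoid.inv (monoid.inv h))) f); last first.
    by move=> h /=; rewrite monoid.invgK.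
  by rewrite addrC.
have Eb : pi b = pi b0 :> Q.
  rewrite /b pi_scale pi_add pi_star hb -mulr2n -scaler_nat scalerA mulVf ?scale1r //.
  exact: two_neq0.
have := idealI_gen x fixb => /piE; rewrite !pi_mul Eb => ->; done.
Qed.
End Quot4.

Lemma zjac (V : zmodType) (a b c d e f : V) :
  (a - b - (c - d)) + (e - d - (a - f)) + (c - f - (e - b)) = 0.
Proof.
rewrite !opprB !addrA.
rewrite (ACl ((1*8)*(2*11)*(3*6)*(4*9)*(5*12)*(7*10)))%AC /=.
by rewrite !(subrr, addNr, add0r).
Qed.

Lemma ziv (V : zmodType) (D C A B : V) :
  (D - C + A) - (C - D + B) - (A - B) = (D - C) *+ 2.
Proof.
rewrite mulr2n !opprD !opprK !addrA.
rewrite (ACl ((1*2*5*4)*(3*7)*(6*8)))%AC /=.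
by rewrite subrr addNr !addr0.
Qed.

Section Quot5.
Variables (K : fieldType) (G : groupType).
Hypothesis charK0 : [pchar K] =i pred0.
Local Notation Q := (Q K G).
Local Notation t := (2%:R^-1 : K).

Definition qdot (x y : Q) := (- t) *: (x*y + y*x).
Definition qbrk (x y : Q) := t *: (x*y - y*x).

Lemma cent (u : Q) : Qst u = u -> forall x, x * u = u * x.
Proof. exact: (@Qcentral K G charK0). Qed.
Lemma centr (u : Q) : Qst u = u -> forall x, u * x = x * u.
Proof. by move=> h x; rewrite (cent h). Qed.

Lemma QstN (x : Q) : Qst (- x) = - Qst x.
Proof. by rewrite -scaleN1r QstZ scaleN1r. Qed.
Lemma QstB (x y : Q) : Qst (x - y) = Qst x - Qst y.
Proof. by rewrite QstD QstN. Qed.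

Lemma Sh_sym (x y : Q) : Qst x = - x -> Qst y = - y -> Qst (x*y + y*x) = x*y + y*x.
Proof. by move=> hx hy; rewrite QstD !QstM hx hy !mulrNN addrC. Qed.
Lemma Sh_dot (x y : Q) : Qst x = - x -> Qst y = - y -> Qst (qdot x y) = qdot x y.
Proof. by move=> hx hy; rewrite /qdot QstZ Sh_sym. Qed.
Lemma Lam_brk (x y : Q) : Qst x = - x -> Qst y = - y -> Qst (qbrk x y) = - qbrk x y.
Proof. by move=> hx hy; rewrite /qbrk QstZ QstB !QstM hx hy !mulrNN -scalerN opprB. Qed.
Lemma Sh_sq (x : Q) : Qst x = - x -> Qst (x * x) = x * x.
Proof. by move=> hx; rewrite QstM hx mulrNN. Qed.

Lemma dotC (x y : Q) : qdot x y = qdot y x.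
Proof. by rewrite /qdot addrC. Qed.
Lemma brkN (x y : Q) : qbrk x y = - qbrk y x.
Proof. by rewrite /qbrk -scalerN opprB. Qed.
Lemma dotDl (x x' y : Q) : qdot (x + x') y = qdot x y + qdot x' y.
Proof. by rewrite /qdot mulrDl mulrDr addrACA scalerDr. Qed.
Lemma brkDl (x x' y : Q) : qbrk (x + x') y = qbrk x y + qbrk x' y.
Proof. by rewrite /qbrk mulrDl mulrDr opprD addrACA scalerDr. Qed.
Lemma dotMl (a x y : Q) : a * y = y * a -> qdot (a * x) y = a * qdot x y.
Proof.
move=> ay; rewrite /qdot -QsAr mulrDr -[a * x * y]mulrA [y * (a * x)]mulrA -ay -mulrA.
done.
Qed.
Lemma brkMl (a x y : Q) : a * y = y * a -> qbrk (a * x) y = a * qbrk x y.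
Proof.
move=> ay; rewrite /qbrk -QsAr mulrBr -[a * x * y]mulrA [y * (a * x)]mulrA -ay -mulrA.
done.
Qed.
Lemma dotDr (x y y' : Q) : qdot x (y + y') = qdot x y + qdot x y'.
Proof. by rewrite dotC dotDl !(dotC x). Qed.
Lemma dotMr (a x y : Q) : a * x = x * a -> qdot x (a * y) = a * qdot x y.
Proof. by move=> ax; rewrite dotC dotMl // dotC. Qed.
Lemma brkDr (x y y' : Q) : qbrk x (y + y') = qbrk x y + qbrk x y'.
Proof. by rewrite brkN brkDl opprD -!brkN. Qed.
Lemma brkMr (a x y : Q) : a * x = x * a -> qbrk x (a * y) = a * qbrk x y.
Proof. by move=> ax; rewrite brkN brkMl // -mulrN -brkN. Qed.
Lemma dotZl (k : K) (x y : Q) : qdot (k *: x) y = k *: qdot x y.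
Proof. by rewrite /qdot -QsAl -QsAr -scalerDr !scalerA mulrC. Qed.
Lemma brkZl (k : K) (x y : Q) : qbrk (k *: x) y = k *: qbrk x y.
Proof. by rewrite /qbrk -QsAl -QsAr -scalerBr !scalerA mulrC. Qed.
Lemma dotNl (x y : Q) : qdot (- x) y = - qdot x y.
Proof. by rewrite -scaleN1r dotZl scaleN1r. Qed.

Lemma brkbrk (u v w : Q) :
  qbrk (qbrk u v) w = (t * t) *: ((u*v - v*u)*w - w*(u*v - v*u)).
Proof. by rewrite [qbrk u v]/qbrk brkZl /qbrk scalerA. Qed.

Lemma jacobi (x y z : Q) : qbrk (qbrk x y) z + qbrk (qbrk y z) x + qbrk (qbrk z x) y = 0.
Proof. by rewrite !brkbrk -!scalerDr !mulrBl !mulrBr !mulrA zjac scaler0. Qed.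

Lemma dot_brk_x (x y : Q) : Qst x = - x -> qdot (qbrk x y) x = 0.
Proof.
move=> hx; rewrite /qdot /qbrk -QsAl -QsAr -scalerDr mulrBl mulrBr !mulrA.
rewrite -[y * x * x]mulrA -(cent (Sh_sq hx) y) mulrA.
by rewrite addrC !addrA subrK subrr !scaler0.
Qed.

Lemma iv (x y z : Q) : Qst x = - x -> Qst y = - y -> Qst z = - z ->
  qbrk (qbrk x y) z = qdot x z * y - qdot y z * x.
Proof.
move=> hx hy hz.
set c := x * z + z * x; set d := y * z + z * y.
have hc : Qst c = c by exact: Sh_sym.
have hd : Qst d = d by exact: Sh_sym.
have yz : y * z = d - z * y by rewrite /d addrK.
have xz : x * z = c - z * x by rewrite /c addrK.
have eq1 : x * y * z = d * x - c * y + z * x * y.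
  by rewrite -mulrA yz mulrBr (cent hd x) mulrA xz mulrBl opprD opprK addrA.
have eq2 : y * x * z = c * y - d * x + z * y * x.
  by rewrite -mulrA xz mulrBr (cent hc y) mulrA yz mulrBl opprD opprK addrA.
rewrite brkbrk mulrBl mulrBr !mulrA eq1 eq2 ziv.
rewrite /qdot -/c -/d -!QsAl -scalerBr scaleNr -scalerN opprB.
rewrite -scaler_nat scalerA -mulrA mulVf ?mulr1 //.
by have /pcharf0P -> := charK0.
Qed.
End Quot5.

Section Final.
Variables (K : fieldType) (G : groupType).
Hypothesis charK0 : [pchar K] =i pred0.
Implicit Types a b x y z : KG K G.

Lemma pi_dot x y : pi (dotG x y) = qdot (pi x) (pi y).
Proof. by rewrite /dotG pi_scale pi_add !pi_mul. Qed.
Lemma pi_brk x y : pi (brkG x y) = qbrk (pi x) (pi y).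
Proof. by rewrite /brkG pi_scale pi_sub !pi_mul. Qed.
Lemma sh a : in_sharp a -> Qst (pi a) = pi a.
Proof. by move/piE; rewrite pi_star. Qed.
Lemma lam x : in_Lambda x -> Qst (pi x) = - pi x.
Proof. by move/piE; rewrite pi_star pi_opp. Qed.

Ltac tr := apply/piE; rewrite ?(pi_dot, pi_brk, pi_add, pi_sub, pi_opp, pi_mul, pi_nil).
Let centr := @centr K G charK0.

Lemma M1 a b x x' y : in_sharp a -> in_sharp b -> in_Lambda x -> in_Lambda x' -> in_Lambda y ->
  AG_eq (dotG (kg_add (kg_mul a x) (kg_mul b x')) y)
        (kg_add (kg_mul a (dotG x y)) (kg_mul b (dotG x' y))).
Proof.
move=> /sh ha /sh hb _ _ _; tr.
by rewrite dotDl (dotMl _ (centr ha _)) (dotMl _ (centr hb _)).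
Qed.
Lemma M2 a b x y y' : in_sharp a -> in_sharp b -> in_Lambda x -> in_Lambda y -> in_Lambda y' ->
  AG_eq (dotG x (kg_add (kg_mul a y) (kg_mul b y')))
        (kg_add (kg_mul a (dotG x y)) (kg_mul b (dotG x y'))).
Proof.
move=> /sh ha /sh hb _ _ _; tr.
by rewrite dotDr (dotMr _ (centr ha _)) (dotMr _ (centr hb _)).
Qed.
Lemma M3 a b x x' y : in_sharp a -> in_sharp b -> in_Lambda x -> in_Lambda x' -> in_Lambda y ->
  AG_eq (brkG (kg_add (kg_mul a x) (kg_mul b x')) y)
        (kg_add (kg_mul a (brkG x y)) (kg_mul b (brkG x' y))).
Proof.
move=> /sh ha /sh hb _ _ _; tr.
by rewrite brkDl (brkMl _ (centr ha _)) (brkMl _ (centr hb _)).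
Qed.
Lemma M4 a b x y y' : in_sharp a -> in_sharp b -> in_Lambda x -> in_Lambda y -> in_Lambda y' ->
  AG_eq (brkG x (kg_add (kg_mul a y) (kg_mul b y')))
        (kg_add (kg_mul a (brkG x y)) (kg_mul b (brkG x y'))).
Proof.
move=> /sh ha /sh hb _ _ _; tr.
by rewrite brkDr (brkMr _ (centr ha _)) (brkMr _ (centr hb _)).
Qed.
Lemma M5 x y : in_Lambda x -> in_Lambda y -> AG_eq (dotG x y) (dotG y x).
Proof. by move=> _ _; tr; rewrite dotC. Qed.
Lemma M6 x y : in_Lambda x -> in_Lambda y -> AG_eq (brkG x y) (kg_opp (brkG y x)).
Proof. by move=> _ _; tr; rewrite brkN. Qed.
Lemma M7 x y z : in_Lambda x -> in_Lambda y -> in_Lambda z ->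
  AG_eq (kg_add (kg_add (brkG (brkG x y) z) (brkG (brkG y z) x)) (brkG (brkG z x) y)) [::].
Proof. by move=> _ _ _; tr; rewrite jacobi. Qed.
Lemma M8 a b x x' y z : in_sharp a -> in_sharp b ->
  in_Lambda x -> in_Lambda x' -> in_Lambda y -> in_Lambda z ->
  AG_eq (dotG (brkG (kg_add (kg_mul a x) (kg_mul b x')) y) z)
        (kg_add (kg_mul a (dotG (brkG x y) z)) (kg_mul b (dotG (brkG x' y) z))).
Proof.
move=> /sh ha /sh hb _ _ _ _; tr.
rewrite brkDl (brkMl _ (centr ha _)) (brkMl _ (centr hb _)).
by rewrite dotDl (dotMl _ (centr ha _)) (dotMl _ (centr hb _)).
Qed.
Lemma M9 a b x y y' z : in_sharp a -> in_sharp b ->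
  in_Lambda x -> in_Lambda y -> in_Lambda y' -> in_Lambda z ->
  AG_eq (dotG (brkG x (kg_add (kg_mul a y) (kg_mul b y'))) z)
        (kg_add (kg_mul a (dotG (brkG x y) z)) (kg_mul b (dotG (brkG x y') z))).
Proof.
move=> /sh ha /sh hb _ _ _ _; tr.
rewrite brkDr (brkMr _ (centr ha _)) (brkMr _ (centr hb _)).
by rewrite dotDl (dotMl _ (centr ha _)) (dotMl _ (centr hb _)).
Qed.
Lemma M10 a b x y z z' : in_sharp a -> in_sharp b ->
  in_Lambda x -> in_Lambda y -> in_Lambda z -> in_Lambda z' ->
  AG_eq (dotG (brkG x y) (kg_add (kg_mul a z) (kg_mul b z')))
        (kg_add (kg_mul a (dotG (brkG x y) z)) (kg_mul b (dotG (brkG x y) z'))).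
Proof.
move=> /sh ha /sh hb _ _ _ _; tr.
by rewrite dotDr (dotMr _ (centr ha _)) (dotMr _ (centr hb _)).
Qed.
Lemma M11 x y : in_Lambda x -> in_Lambda y ->
  AG_eq (dotG (brkG x x) y) [::] /\ AG_eq (dotG (brkG x y) x) [::] /\
  AG_eq (dotG (brkG y x) x) [::].
Proof.
move=> /lam hx _; split; [|split]; tr.
- by rewrite /qbrk subrr scaler0 /qdot mul0r mulr0 addr0 scaler0.
- exact: (dot_brk_x charK0).
- by rewrite brkN dotNl (dot_brk_x charK0) // oppr0.
Qed.
Lemma M12 x y z : in_Lambda x -> in_Lambda y -> in_Lambda z ->
  AG_eq (brkG (brkG x y) z) (kg_sub (kg_mul (dotG x z) y) (kg_mul (dotG y z) x)).
Proof. by move=> /lam hx /lam hy /lam hz; tr; apply: iv. Qed.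
End Final.

Theorem mainTheorem7 (K : fieldType) (G : groupType)
  (charK0 : [pchar K] =i pred0) :
  (* (i) bilinearity over kappa G^#, symmetry of ., skew-symmetry of [,] *)
  (forall a b x x' y : KG K G, in_sharp a -> in_sharp b ->
     in_Lambda x -> in_Lambda x' -> in_Lambda y ->
     AG_eq (dotG (kg_add (kg_mul a x) (kg_mul b x')) y)
           (kg_add (kg_mul a (dotG x y)) (kg_mul b (dotG x' y)))) /\
  (forall a b x y y' : KG K G, in_sharp a -> in_sharp b ->
     in_Lambda x -> in_Lambda y -> in_Lambda y' ->
     AG_eq (dotG x (kg_add (kg_mul a y) (kg_mul b y')))
           (kg_add (kg_mul a (dotG x y)) (kg_mul b (dotG x y')))) /\
  (forall a b x x' y : KG K G, in_sharp a -> in_sharp b ->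
     in_Lambda x -> in_Lambda x' -> in_Lambda y ->
     AG_eq (brkG (kg_add (kg_mul a x) (kg_mul b x')) y)
           (kg_add (kg_mul a (brkG x y)) (kg_mul b (brkG x' y)))) /\
  (forall a b x y y' : KG K G, in_sharp a -> in_sharp b ->
     in_Lambda x -> in_Lambda y -> in_Lambda y' ->
     AG_eq (brkG x (kg_add (kg_mul a y) (kg_mul b y')))
           (kg_add (kg_mul a (brkG x y)) (kg_mul b (brkG x y')))) /\
  (forall x y : KG K G, in_Lambda x -> in_Lambda y ->
     AG_eq (dotG x y) (dotG y x)) /\
  (forall x y : KG K G, in_Lambda x -> in_Lambda y ->
     AG_eq (brkG x y) (kg_opp (brkG y x))) /\
  (* (ii) Jacobi identity *)
  (forall x y z : KG K G, in_Lambda x -> in_Lambda y -> in_Lambda z ->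
     AG_eq (kg_add (kg_add (brkG (brkG x y) z) (brkG (brkG y z) x))
                   (brkG (brkG z x) y)) [::]) /\
  (* (iii) (x, y, z) |-> [x, y] . z is trilinear over kappa G^# and alternating *)
  (forall a b x x' y z : KG K G, in_sharp a -> in_sharp b ->
     in_Lambda x -> in_Lambda x' -> in_Lambda y -> in_Lambda z ->
     AG_eq (dotG (brkG (kg_add (kg_mul a x) (kg_mul b x')) y) z)
           (kg_add (kg_mul a (dotG (brkG x y) z))
                   (kg_mul b (dotG (brkG x' y) z)))) /\
  (forall a b x y y' z : KG K G, in_sharp a -> in_sharp b ->
     in_Lambda x -> in_Lambda y -> in_Lambda y' -> in_Lambda z ->
     AG_eq (dotG (brkG x (kg_add (kg_mul a y) (kg_mul b y'))) z)
           (kg_add (kg_mul a (dotG (brkG x y) z))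
                   (kg_mul b (dotG (brkG x y') z)))) /\
  (forall a b x y z z' : KG K G, in_sharp a -> in_sharp b ->
     in_Lambda x -> in_Lambda y -> in_Lambda z -> in_Lambda z' ->
     AG_eq (dotG (brkG x y) (kg_add (kg_mul a z) (kg_mul b z')))
           (kg_add (kg_mul a (dotG (brkG x y) z))
                   (kg_mul b (dotG (brkG x y) z')))) /\
  (forall x y : KG K G, in_Lambda x -> in_Lambda y ->
     AG_eq (dotG (brkG x x) y) [::] /\
     AG_eq (dotG (brkG x y) x) [::] /\
     AG_eq (dotG (brkG y x) x) [::]) /\
  (* (iv) [[x, y], z] = (x . z) y - (y . z) x *)
  (forall x y z : KG K G, in_Lambda x -> in_Lambda y -> in_Lambda z ->
     AG_eq (brkG (brkG x y) z)
           (kg_sub (kg_mul (dotG x z) y) (kg_mul (dotG y z) x))).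
Proof.
exact: (conj (@M1 K G charK0) (conj (@M2 K G charK0) (conj (@M3 K G charK0)
  (conj (@M4 K G charK0) (conj (@M5 K G) (conj (@M6 K G) (conj (@M7 K G)
  (conj (@M8 K G charK0) (conj (@M9 K G charK0) (conj (@M10 K G charK0)
  (conj (@M11 K G charK0) (@M12 K G charK0)))))))))))).
Qed.
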